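(* Let $p$ be a prime, $q=p^r$ with $r\in\mathbb{Z}^+$, and let $d\neq p$ be a prime such that $q\not\equiv 1\pmod{d}$. Then for all integers $a$ with $1\le a\le q-2$ and all integers $i$ with $0\le i\le r-1$, $$d\left\lfloor\frac{ap^i}{q-1}\right\rfloor+\left\lfloor\frac{-dap^i}{q-1}\right\rfloor=(d-1)\left\lfloor\frac{ap^i}{q-1}\right\rfloor+\sum_{h=1}^{d-1}\left\lfloor\left\langle\frac{hp^i}{d}\right\rangle-\frac{ap^i}{q-1}\right\rfloor-1.$$
   Context: For $x\in\mathbb{Q}$, $\lfloor x\rfloor$ denotes the greatest integer less than or equal to $x$, and $\langle x\rangle=x-\lfloor x\rfloor$ denotes its fractional part. *)

(* Defs.v *)
From mathcomp Require Import all_boot all_order all_algebra.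
Import Order.TTheory GRing.Theory Num.Theory.
Local Open Scope ring_scope.

Definition qfloor (x : rat) : int := Num.floor x.
Definition qfrac (x : rat) : rat := x - (qfloor x)%:~R.

(* Main.v *)
Require Import Defs.
From mathcomp Require Import all_boot all_order all_algebra.
From mathcomp Require Import ring lra zify.
Import Order.TTheory GRing.Theory Num.Theory.
Local Open Scope ring_scope.
Lemma count_ge (R d : nat) : (R <= d)%N ->
  (\sum_(0 <= k < d) (d <= R + k)%N : nat)%N = R.
Proof.
move=> hR.
rewrite (big_cat_nat _ (n:=d - R)) //=; last by rewrite leq_subr.
rewrite big_nat_cond big1 ?add0n; last first.
  move=> k /andP[/andP[_ hk] _]; apply/eqP; rewrite eqb0 -ltnNge; lia.
rewrite big_nat_cond (eq_bigr (fun _ => 1%N)); last first.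
  move=> k /andP[/andP[hk _] _]; rewrite (_ : (d <= R + k)%N = true) //; lia.
rewrite -big_nat_cond sum_nat_const_nat; lia.
Qed.

Lemma hermite (d : nat) (y : rat) : (0 < d)%N ->
  Num.floor (d%:R * y) = \sum_(k < d) Num.floor (y + k%:R / d%:R).
Proof.
move=> d0.
set n := Num.floor (d%:R * y).
have hn := floor_itv (d%:R * y); rewrite -/n in hn.
have [Rn hRn] : exists Rn : nat, (n %% d%:Z)%Z = Rn.
  by exists `|(n %% d%:Z)%Z|%N; rewrite gez0_abs // modz_ge0 // lt0n_neq0.
have hRd : (Rn < d)%N.
  have := ltz_pmod n (d := d%:Z); rewrite hRn ltz_nat; apply; rewrite ltz_nat.
  done.
set Q := (n %/ d%:Z)%Z.
have hnQ : n = Q * d%:Z + Rn%:Z by rewrite -hRn [LHS](divz_eq n d%:Z).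
have Dp : (0 : rat) < d%:R by rewrite ltr0n.
have eqk : forall k : 'I_d, Num.floor (y + k%:R / d%:R) = Q + (d <= Rn + k)%N%:Z.
  move=> k; apply: floor_def.
  have hk := ltn_ord k.
  move: hn; rewrite hnQ !rmorphD /= !rmorphM /= -!pmulrn rmorph1 => /andP[h1 h2].
  have hyk : y + k%:R / d%:R = (d%:R * y + k%:R) / d%:R by field; rewrite lt0r_neq0.
  rewrite hyk ler_pdivlMr // ltr_pdivrMr //.
  have R0 : (0:rat) <= Rn%:R by rewrite ler0n.
  have k0 : (0:rat) <= k%:R by rewrite ler0n.
  case: leqP => hb.
    have hb' : ((d%:R : rat) <= Rn%:R + k%:R) by rewrite -natrD ler_nat.
    have hb2 : (Rn%:R + k%:R + 1 <= 2 * (d%:R : rat)).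
      rewrite -natrD -[2 * _](natrM _ 2) -[1]/(1%:R) -natrD ler_nat; lia.
    rewrite ?rmorphD /= -?pmulrn ?rmorph0 ?rmorph1; apply/andP; split; nra.
  have hb' : (Rn%:R + k%:R + 1 <= (d%:R : rat)).
    rewrite -natrD -[1]/(1%:R) -natrD ler_nat; lia.
  rewrite ?rmorphD /= -?pmulrn ?rmorph0 ?rmorph1; apply/andP; split; nra.
rewrite (eq_bigr _ (fun k _ => eqk k)) big_split /= sumr_const card_ord.
rewrite -(big_morph Posz PoszD (erefl (Posz 0))).
rewrite -(big_mkord xpredT (fun k => (d <= Rn + k)%N : nat)).
rewrite (@count_ge Rn d (ltnW hRd)).
rewrite [LHS]hnQ; congr (_ + _).
by rewrite pmulrn mulrzz.
Qed.

Lemma sum_perm (d c : nat) (G : nat -> int) : (0 < d)%N -> coprime c d ->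
  \sum_(1 <= h < d) G ((h * c) %% d)%N = \sum_(1 <= k < d) G k.
Proof.
move=> d0 cop.
have E : forall F : nat -> int, \sum_(0 <= h < d) F h = F 0%N + \sum_(1 <= h < d) F h.
  by move=> F; rewrite big_ltn.
apply: (addrI (G 0%N)).
have := E (fun h => G ((h * c) %% d)%N); rewrite /= mul0n mod0n => <-.
rewrite -E !big_mkord.
pose f (h : 'I_d) : 'I_d := Ordinal (ltn_pmod (h * c) d0).
have key : forall u v : nat, (u <= v)%N -> (v < d)%N ->
    ((u * c) %% d = (v * c) %% d)%N -> u = v.
  move=> u v huv hv /eqP heq.
  move: heq; rewrite eq_sym eqn_mod_dvd ?leq_mul2r ?huv ?orbT // -mulnBl.
  rewrite Gauss_dvdl; last by rewrite coprime_sym.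
  rewrite /dvdn modn_small; last by lia.
  move/eqP; lia.
have inj_f : injective f.
move=> h h' /(congr1 val) /= heq; apply/val_inj => /=.
case: (leqP h h') => hle.
  by apply: key => //; exact: ltn_ord.
apply/esym/key; [exact: ltnW | exact: ltn_ord | by rewrite heq].
by rewrite -(reindex_inj (P:=xpredT) (F:=fun i : 'I_d => G i) inj_f).
Qed.

Lemma frac_mod (m d : nat) : (0 < d)%N ->
  (m%:R / d%:R : rat) - (Num.floor (m%:R / d%:R : rat))%:~R = (m %% d)%N%:R / d%:R.
Proof.
move=> d0.
have Dp : (0 : rat) < d%:R by rewrite ltr0n.
have hE : (m%:R / d%:R : rat) = ((m %/ d)%N%:Z)%:~R + (m %% d)%N%:R / d%:R.
  rewrite {1}(divn_eq m d) natrD natrM -pmulrn; field; exact: lt0r_neq0.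
have F : Num.floor ((m %% d)%N%:R / d%:R : rat) = 0.
  apply: floor_def; rewrite rmorph0 add0r rmorph1.
  rewrite divr_ge0 ?ler0n //= ltr_pdivrMr // mul1r ltr_nat ltn_pmod //.
rewrite hE floorDzr ?intr_int // intrKfloor rmorphD /=. rewrite (_ : Num.floor ((m %% d)%N%:R / d%:R) = 0). ring. exact: F.
Qed.

Lemma floorN_nonint (x : rat) : (Num.floor x)%:~R != x ->
  Num.floor (- x) = - Num.floor x - 1.
Proof.
move=> ne; apply: floor_def.
have /andP[h1 h2] := floor_itv x.
have h3 : (Num.floor x)%:~R < x by rewrite lt_neqAle ne h1.
move: h2; rewrite !rmorphD !rmorphN /= rmorph1 => h2.
rewrite addrNK; apply/andP; split; lra.
Qed.

Theorem lemma3p2 (p r d : nat) (a : int) (i : nat) :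
  prime p -> (0 < r)%N -> prime d -> d != p ->
  (p ^ r != 1 %[mod d])%N ->
  1 <= a <= (p ^ r)%N%:Z - 2 ->
  (i <= r - 1)%N ->
  let q : int := (p ^ r)%N%:Z in
  let x : rat := (a * (p ^ i)%N%:Z)%:~R / (q - 1)%:~R in
  d%:Z * qfloor x + qfloor (- (d%:R) * x)
  = (d%:Z - 1) * qfloor x
    + \sum_(1 <= h < d) qfloor (qfrac ((h * p ^ i)%N%:R / d%:R) - x) - 1.
Proof.
move=> pp r0 pd dp _ /andP[a1 a2] _ q x.
have d0 : (0 < d)%N by exact: prime_gt0.
have p0 : (0 < p)%N by exact: prime_gt0.
have q1 : (1 <= p ^ r)%N by rewrite expn_gt0 p0.
have cop : coprime (p ^ i) d.
  by apply: coprimeXl; rewrite prime_coprime // dvdn_prime2 // eq_sym.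
have nonint : (Num.floor x)%:~R != x.
  apply/negP => /eqP hx.
  have [an ha] : exists an : nat, a = an%:Z.
    by exists `|a|%N; rewrite gez0_abs //; lra.
  have hq : (q - 1) = (p ^ r - 1)%N%:Z by rewrite /q subzn.
  have B0 : (0 : rat) < (q - 1)%:~R.
    rewrite hq ltr0z ltz_nat; move: a1 a2; rewrite ha /q => a1 a2.
    have : (1 <= an)%N by lia.
    have : (an + 2 <= p ^ r)%N by lia.
    lia.
  have : (a * (p ^ i)%N%:Z) = Num.floor x * (q - 1).
    apply: (intr_inj (R := rat)); rewrite !rmorphM /= hx /x !rmorphM /=.
    field; apply: lt0r_neq0; move: B0; rewrite /q rmorphB /= rmorph1; exact.
  rewrite ha hq => /(congr1 absz); rewrite abszM /= => heq.
  have hdiv : ((p ^ r - 1) %| an * p ^ i)%N.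
    by rewrite !abszM /= in heq; rewrite heq dvdn_mull.
  move: hdiv; rewrite Gauss_dvdl; last first.
    apply: coprimeXr; rewrite -(coprime_pexpr _ _ r0).
    by rewrite subn1 coprimePn // expn_gt0 p0.
  move=> hdv.
  have an0 : (0 < an)%N by rewrite ha in a1; lia.
  have := dvdn_leq an0 hdv.
  move: a2; rewrite ha /q => a2.
  have : (an + 2 <= p ^ r)%N by lia.
  lia.
have HN := floorN_nonint _ nonint.
have H1 : qfloor (- (d%:R) * x) = \sum_(k < d) Num.floor (- x + k%:R / d%:R).
  by rewrite /qfloor -hermite // mulrN mulNr.
have H2 : \sum_(1 <= h < d) qfloor (qfrac ((h * p ^ i)%N%:R / d%:R) - x)
          = \sum_(1 <= k < d) Num.floor (- x + k%:R / d%:R).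
  under eq_bigr => h _ do rewrite /qfrac /qfloor frac_mod //.
  have := @sum_perm d (p ^ i) (fun k => Num.floor ((k%:R / d%:R : rat) - x)) d0 cop.
  move=> /= ->.
  by apply: eq_bigr => k _; rewrite addrC.
have H3 : \sum_(k < d) Num.floor (- x + k%:R / d%:R)
    = Num.floor (- x) + \sum_(1 <= k < d) Num.floor (- x + k%:R / d%:R).
  rewrite -(big_mkord xpredT (fun k => Num.floor (- x + k%:R / d%:R))) big_ltn //.
  by rewrite mul0r addr0.
rewrite H1 H2 H3 HN /qfloor; ring.
Qed.
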